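(* Let $M$ be a $3$-connected simple matroid with a $3$-connected simple minor $N$. Suppose that $x$ and $p$ are elements of $M$ such that $\{x,p\}$ is vertically $N$-contractible in $M$ but $p$ is not vertically $N$-contractible in $M$. Then $r(M)\ge 4$ and there is an $(M,N)$-vertbarrier $(C^*,p)$ with $x\in C^*$.
   Context: An element $p$ (or a set $X$) is vertically $N$-contractible in $M$ if $\mathrm{si}(M/p)$ (resp. $\mathrm{si}(M/X)$), the simplification, is a $3$-connected matroid with an $N$-minor. An $(M,N)$-vertbarrier is a pair $(C^*,p)$ where $C^*$ is a cocircuit of $M$ of rank $3$, $p\in\mathrm{cl}_M(C^* )-C^*$, and $\mathrm{si}(M/\{x,p\})$ is $3$-connected with an $N$-minor for some $x\in C^*$. *)

(* Defs.v *)
From mathcomp Require Import all_boot.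
Set Implicit Arguments. Unset Strict Implicit. Unset Printing Implicit Defensive.

(* Minors etc. are defined as data
   (their matroid axioms are consequences, not needed for definitions). *)
Record matroid (E : finType) := Matroid {
  ground : {set E};
  indep : {set E} -> bool }.

Section Matroids.
Variable E : finType.
Implicit Types (M : matroid E) (A B C D S I J X : {set E}) (e f : E).

Definition is_matroid M : Prop :=
  [/\ indep M set0,
      (forall I, indep M I -> I \subset ground M),
      (forall I J, J \subset I -> indep M I -> indep M J) &
      (forall I J, indep M I -> indep M J -> #|I| < #|J| ->
         exists2 e, e \in J :\: I & indep M (e |: I))].

Definition rk M A : nat := \max_(B : {set E} | (B \subset A) && indep M B) #|B|.

Definition rank M : nat := rk M (ground M).

Definition cl M X : {set E} := [set e in ground M | rk M (e |: X) == rk M X].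

Definition contract M X : matroid E :=
  Matroid (ground M :\: X)
    (fun I => (I \subset ground M :\: X) && (rk M (I :|: X) == #|I| + rk M X)).

Definition restrict M S : matroid E :=
  Matroid S (fun I => (I \subset S) && indep M I).

Definition delete M D : matroid E := restrict M (ground M :\: D).

Definition dual M : matroid E :=
  Matroid (ground M)
    (fun I => (I \subset ground M) && (rk M (ground M :\: I) == rk M (ground M))).

Definition circuit M C : Prop :=
  [/\ C \subset ground M, ~~ indep M C &
      forall D, D \proper C -> indep M D].

Definition cocircuit M C : Prop := circuit (dual M) C.

Definition loop M e : Prop := e \in ground M /\ ~~ indep M [set e].

Definition parallel M e f : Prop :=
  [/\ e \in ground M, f \in ground M, e != f &
      [/\ indep M [set e], indep M [set f] & ~~ indep M [set e; f]]].

Definition simple M : Prop :=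
  (forall e, ~ loop M e) /\ (forall e f, ~ parallel M e f).

Definition k_separation M k X : Prop :=
  [/\ X \subset ground M, k <= #|X|, k <= #|ground M :\: X| &
      rk M X + rk M (ground M :\: X) < rank M + k].

Definition three_connected M : Prop :=
  forall k X, k < 3 -> ~ k_separation M k X.

(* S is the ground set of a simplification of M: a set of representatives,
   one from each parallel class of non-loop elements *)
Definition simplification_set M S : Prop :=
  [/\ S \subset ground M,
      (forall e, e \in S -> ~ loop M e),
      (forall e f, e \in S -> f \in S -> ~ parallel M e f) &
      (forall e, e \in ground M -> ~ loop M e ->
         e \in S \/ exists2 f, f \in S & parallel M e f)].

Definition si M S : matroid E := restrict M S.

End Matroids.

Definition iso_matroid (E E' : finType) (M : matroid E) (N : matroid E') : Prop :=
  exists f : E -> E',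
    [/\ {in ground M &, injective f},
        f @: ground M = ground N &
        forall I : {set E}, I \subset ground M -> indep M I = indep N (f @: I)].

Definition has_minor (E E' : finType) (M : matroid E) (N : matroid E') : Prop :=
  exists C D : {set E},
    [/\ C \subset ground M, D \subset ground M, [disjoint C & D] &
        iso_matroid (delete (contract M C) D) N].

Definition vert_N_contractible (E E' : finType) (M : matroid E) (N : matroid E')
    (X : {set E}) : Prop :=
  exists S : {set E},
    [/\ simplification_set (contract M X) S,
        three_connected (si (contract M X) S) &
        has_minor (si (contract M X) S) N].

Definition vertbarrier (E E' : finType) (M : matroid E) (N : matroid E')
    (Cs : {set E}) (p : E) : Prop :=
  [/\ cocircuit M Cs, rk M Cs = 3, p \in cl M Cs :\: Cs &
      exists2 x, x \in Cs & vert_N_contractible M N [set x; p]].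

(* Main.v *)
Require Import Defs.
From mathcomp Require Import all_boot zify.
From Stdlib Require Import Classical.
Set Implicit Arguments. Unset Strict Implicit. Unset Printing Implicit Defensive.

Section Rank.
Variable (E : finType) (M : matroid E).
Hypothesis hM : is_matroid M.
Local Notation r := (rk M).
Local Notation G := (ground M).
Implicit Types (A B C D I J X Y : {set E}) (e f : E).

Lemma indep0 : indep M set0. Proof. by case: hM. Qed.
Lemma indep_sub I : indep M I -> I \subset G. Proof. by case: hM => _ h _ _; apply: h. Qed.
Lemma indep_subset I J : J \subset I -> indep M I -> indep M J.
Proof. by case: hM => _ _ h _; apply: h. Qed.
Lemma indep_aug I J : indep M I -> indep M J -> #|I| < #|J| ->
  exists2 e, e \in J :\: I & indep M (e |: I).
Proof. by case: hM => _ _ _ h; apply: h. Qed.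

Lemma rk_max A B : B \subset A -> indep M B -> #|B| <= r A.
Proof.
move=> sBA iB; rewrite /rk.
by apply: (leq_bigmax_cond (P := fun B => (B \subset A) && indep M B)); rewrite sBA iB.
Qed.

Lemma rk_le A : r A <= #|A|.
Proof. rewrite /rk; apply/bigmax_leqP => B /andP [sBA _]; by apply: subset_leq_card. Qed.

Lemma rk_ex A : exists2 B : {set E}, (B \subset A) && indep M B & #|B| = r A.
Proof.
case: (boolP [exists B : {set E}, (B \subset A) && indep M B && (#|B| == r A)]).
  by case/existsP => B /andP [h /eqP e]; exists B.
move/existsPn => H.
have : r A <= (r A).-1.
  rewrite {1}/rk; apply/bigmax_leqP => B hB.
  have := H B; rewrite hB /= => /eqP ne.
  have := rk_max (A := A) (B := B); case/andP: hB => h1 h2 => /(_ h1 h2); lia.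
case: (r A) (H set0) => [|n] //=.
by rewrite sub0set indep0 cards0 => /eqP.
by rewrite ltnn.
Qed.

Lemma rk_mono A B : A \subset B -> r A <= r B.
Proof.
move=> sAB; rewrite {1}/rk; apply/bigmax_leqP => C /andP [sCA iC].
by apply: rk_max => //; apply: subset_trans sAB.
Qed.

Lemma indep_rk I : indep M I -> r I = #|I|.
Proof. by move=> iI; apply/eqP; rewrite eqn_leq rk_le rk_max. Qed.

Lemma rk_indep I : r I = #|I| -> indep M I.
Proof.
move=> h; case: (rk_ex I) => B /andP [sBI iB] hB.
have : B = I by apply/eqP; rewrite eqEcard sBI hB h leqnn.
by move=> <-.
Qed.

Lemma rk_extend I A : I \subset A -> indep M I ->
  exists2 B : {set E}, [&& I \subset B, B \subset A & indep M B] & #|B| = r A.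
Proof.
move=> sIA iI.
have rI : #|I| <= r A by apply: rk_max.
move: {2}(r A - #|I|) (erefl (r A - #|I|)) => n.
elim: n I sIA iI rI => [|n IH] I sIA iI rI hn.
  by exists I; [rewrite subxx sIA iI | lia].
case: (rk_ex A) => B /andP [sBA iB] hB.
case: (indep_aug iI iB _); first lia.
move=> e /setDP [eB eI] ieI.
case: (IH (e |: I)).
- by rewrite subUset sub1set (subsetP sBA) // sIA.
- done.
- by apply: rk_max => //; rewrite subUset sub1set (subsetP sBA) // sIA.
- rewrite cardsU1 eI; lia.
move=> C /and3P [h1 h2 h3] hC; exists C => //.
by rewrite (subset_trans _ h1) ?subsetUr // h2 h3.
Qed.

Lemma rk_submod A B : r (A :|: B) + r (A :&: B) <= r A + r B.
Proof.
case: (rk_ex (A :&: B)) => J /andP [sJ iJ] hJ.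
case: (rk_extend (A := A :|: B) _ iJ).
  by apply: subset_trans sJ _; apply: subset_trans (subsetIl _ _) (subsetUl _ _).
move=> K /and3P [sJK sKU iK] hK.
have hA : #|K :&: A| <= r A by apply: rk_max; rewrite ?subsetIr // (indep_subset _ iK) ?subsetIl.
have hB : #|K :&: B| <= r B by apply: rk_max; rewrite ?subsetIr // (indep_subset _ iK) ?subsetIl.
have e1 : #|K :&: A| + #|K :&: B| = #|K :&: A :|: K :&: B| + #|K :&: A :&: (K :&: B)|.
  by rewrite cardsUI.
have e2 : K :&: A :|: K :&: B = K by rewrite -setIUr; apply/setIidPl.
have e3 : #|J| <= #|K :&: A :&: (K :&: B)|.
  by apply: subset_leq_card; rewrite setIACA setIid subsetI sJK.
rewrite e2 in e1; rewrite -hK -hJ; lia.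
Qed.

End Rank.

Lemma rk_restrict (E : finType) (M : matroid E) S A : rk (restrict M S) A = rk M (A :&: S).
Proof.
rewrite /rk /=; apply: eq_bigl => B; by rewrite subsetI andbA.
Qed.

Lemma set_ind' (T0 : finType) (P : {set T0} -> Prop) :
  P set0 -> (forall (A : {set T0}) x, x \notin A -> P A -> P (x |: A)) -> forall A, P A.
Proof.
move=> P0 Ps A; move: {2}#|A| (erefl #|A|) => n; elim: n A => [|n IH] A hA.
  by move/eqP: hA; rewrite cards_eq0 => /eqP ->.
have : 0 < #|A| by rewrite hA.
case/card_gt0P => x xA.
rewrite -(setD1K xA); apply: Ps; first by rewrite setD11.
apply: IH; rewrite (cardsD1 x A) xA in hA; lia.
Qed.

Section Rank2.
Variable (E : finType) (M : matroid E).
Hypothesis hM : is_matroid M.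
Local Notation r := (rk M).
Local Notation G := (ground M).
Implicit Types (A B C D I J X Y T : {set E}) (e f : E).

Lemma rkU1 A e : r (e |: A) <= (r A).+1.
Proof.
have := rk_submod hM [set e] A; have := rk_le M [set e]; rewrite cards1.
lia.
Qed.

Lemma rk_ground A : r A = r (A :&: G).
Proof.
apply/eqP; rewrite eqn_leq (rk_mono M (subsetIl _ _)) andbT.
case: (rk_ex hM A) => B /andP [sBA iB] <-; apply: rk_max => //.
by rewrite subsetI sBA (indep_sub hM).
Qed.

Lemma rk_mono1 A B e : A \subset B -> r (e |: A) = r A -> r (e |: B) = r B.
Proof.
move=> sAB h; apply/eqP; rewrite eqn_leq (rk_mono M (subsetUr _ _)) andbT.
have := rk_submod hM (e |: A) B.
have -> : e |: A :|: B = e |: B by rewrite -setUA (setUidPr sAB).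
have : r A <= r ((e |: A) :&: B) by apply: rk_mono => //; rewrite subsetI subsetUr sAB.
lia.
Qed.

Lemma rk_span A T : (forall e, e \in T -> r (e |: A) = r A) -> r (A :|: T) = r A.
Proof.
elim/set_ind': T => [|T e eT IH] H; first by rewrite setU0.
have h1 : r (A :|: T) = r A by apply: IH => f fT; apply: H; rewrite in_setU1 fT orbT.
have -> : A :|: (e |: T) = e |: (A :|: T) by rewrite setUCA.
rewrite (rk_mono1 (A := A)) //; first by rewrite subsetUl.
by apply: H; rewrite setU11.
Qed.

Lemma rk_contract X A : rk (contract M X) A + r X = r ((A :&: (G :\: X)) :|: X).
Proof.
set A' := A :&: (G :\: X).
apply/eqP; rewrite eqn_leq; apply/andP; split.
  suff : rk (contract M X) A <= r (A' :|: X) - r X.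
    have : r X <= r (A' :|: X) by apply: rk_mono; rewrite subsetUr.
    lia.
  rewrite {1}/rk; apply/bigmax_leqP => B /andP [sBA] /= /andP [sB /eqP hB].
  have : r (B :|: X) <= r (A' :|: X).
    by apply: rk_mono; apply: setSU; rewrite subsetI sBA.
  lia.
case: (rk_ex hM X) => J /andP [sJX iJ] hJ.
case: (rk_extend hM (A := A' :|: X) _ iJ); first by rewrite (subset_trans sJX) ?subsetUr.
move=> K /and3P [sJK sK iK] hK.
have hKX : K :&: X = J.
  apply/eqP; rewrite eq_sym eqEcard subsetI sJK sJX /= hJ.
  by apply: rk_max => //; rewrite ?subsetIr // (indep_subset hM _ iK) ?subsetIl.
set B := K :\: X.
have sBA' : B \subset A'.
  apply/subsetP => y /setDP [yK yX]; have := subsetP sK y yK; rewrite in_setU (negbTE yX) orbF //.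
have cB : #|B| + #|J| = #|K| by rewrite -hKX addnC cardsID.
have rB : r (B :|: X) = #|K|.
  apply/eqP; rewrite eqn_leq; apply/andP; split.
    by rewrite hK; apply: rk_mono; apply: setSU.
  apply: rk_max => //; apply/subsetP => y yK; rewrite in_setU in_setD yK andbT.
  by case: (y \in X).
have iB : indep (contract M X) B.
  rewrite /= (subset_trans sBA') ?subsetIr //= rB -hJ cB //.
have := rk_max (M := contract M X) (subset_trans sBA' (subsetIl _ _)) iB.
rewrite -hJ -hK; lia.
Qed.
End Rank2.

Section Contr.
Variable (E : finType) (M : matroid E).
Hypothesis hM : is_matroid M.
Local Notation r := (rk M).
Local Notation G := (ground M).
Implicit Types (A B C D I J X Y T S : {set E}) (e f : E).

Lemma rk_le1 A e : r A <= r (e |: A).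
Proof. by apply: rk_mono; rewrite subsetUr. Qed.

Lemma indep_c1 X e :
  indep (contract M X) [set e] = (e \in G :\: X) && (r (e |: X) == 1 + r X).
Proof. by rewrite /= sub1set cards1. Qed.

Lemma loop_c X e : loop (contract M X) e -> r (e |: X) = r X.
Proof.
case=> /= eG; rewrite sub1set eG /= cards1 => /eqP h.
have := rkU1 hM X e; have := rk_le1 X e; lia.
Qed.

Lemma nonloop_c X e : e \in G :\: X -> ~ loop (contract M X) e -> r (e |: X) = (r X).+1.
Proof.
move=> eG nl; case: (boolP (indep (contract M X) [set e])).
  by rewrite indep_c1 eG /= => /eqP ->.
by move=> h; case: nl; split.
Qed.

Lemma par_c X e f : parallel (contract M X) e f ->
  [/\ r (e |: X) = (r X).+1, r (f |: X) = (r X).+1 & r (e |: (f |: X)) = (r X).+1].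
Proof.
case=> /= eG fG nef [].
rewrite !sub1set eG fG /= !cards1 => /eqP he /eqP hf.
have -> : [set e; f] \subset G :\: X by rewrite subUset !sub1set eG fG.
rewrite /= cards2 nef => /eqP h.
have e1 : [set e; f] :|: X = e |: (f |: X) by rewrite setUA.
rewrite e1 in h.
have := rkU1 hM (f |: X) e; have := rk_le1 (f |: X) e; split; lia.
Qed.

Lemma par_c' X e f : parallel (contract M X) e f -> r (f |: (e |: X)) = r (e |: X).
Proof.
case/par_c => h1 h2 h3; rewrite setUCA h3 h1 //.
Qed.

Lemma par_c'' X e f : parallel (contract M X) e f -> r (e |: (f |: X)) = r (f |: X).
Proof. by case/par_c => h1 h2 h3; rewrite h3 h2. Qed.

Lemma cover_c X S e : X \subset G -> simplification_set (contract M X) S -> e \in G ->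
  [\/ r (e |: X) = r X, e \in S |
   exists2 f, f \in S & r (e |: (f |: X)) = r (f |: X) /\ r (f |: (e |: X)) = r (e |: X)].
Proof.
move=> sX [sS nlS npS cov] eG.
case: (boolP (e \in X)) => eX.
  by constructor 1; rewrite (setUidPr _) // sub1set.
case: (classic (loop (contract M X) e)) => hl.
  by constructor 1; apply: loop_c.
have eGX : e \in ground (contract M X) by rewrite /= in_setD eX eG.
case: (cov e eGX hl) => [eS|[f fS pef]]; first by constructor 2.
constructor 3; exists f => //; split; [exact: par_c'' | exact: par_c'].
Qed.

End Contr.

Section Flat.
Variable (E : finType) (M : matroid E).
Hypothesis hM : is_matroid M.
Local Notation r := (rk M).
Local Notation G := (ground M).
Implicit Types (A B C D I J X Y T S F : {set E}) (e f : E).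

Definition flat F := F \subset G /\ forall e, e \in G -> r (e |: F) = r F -> e \in F.

Lemma sub_cl A : A \subset G -> A \subset cl M A.
Proof.
move=> sA; apply/subsetP => e eA; rewrite inE (subsetP sA) //=.
by rewrite (setUidPr _) // sub1set.
Qed.

Lemma cl_sub A : cl M A \subset G.
Proof. by apply/subsetP => e; rewrite inE => /andP []. Qed.

Lemma rk_cl A : A \subset G -> r (cl M A) = r A.
Proof.
move=> sA; apply/eqP; rewrite eqn_leq (rk_mono M (sub_cl sA)) andbT.
rewrite -(rk_span hM (A := A) (T := cl M A)); first by apply: rk_mono; rewrite subsetUr.
by move=> e; rewrite inE => /andP [_ /eqP].
Qed.

Lemma cl_flat A : A \subset G -> flat (cl M A).
Proof.
move=> sA; split; first exact: cl_sub.
move=> e eG h; rewrite inE eG /=.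
apply/eqP/eqP; rewrite eqn_leq rk_le1 andbT.
rewrite -(rk_cl sA) -h; apply: rk_mono; apply: setUS; exact: sub_cl.
Qed.

Lemma flat_notin F e : flat F -> e \in G -> e \notin F -> r (e |: F) = (r F).+1.
Proof.
move=> [sF fl] eG eF.
have := rkU1 hM F e; have := rk_le1 M F e.
have : r (e |: F) != r F by apply/eqP => h; move: eF; rewrite fl.
lia.
Qed.

Lemma flat_span F A e : flat F -> A \subset F -> e \in G -> r (e |: A) = r A -> e \in F.
Proof.
move=> [sF fl] sA eG h; apply: fl => //; exact: rk_mono1 h.
Qed.

End Flat.

Section L2.
Variable (E : finType) (M : matroid E).
Hypothesis hM : is_matroid M.
Local Notation r := (rk M).
Local Notation G := (ground M).
Implicit Types (A B C D I J X Y T S F : {set E}) (e f : E).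

Lemma rkU_le A B : r (A :|: B) <= r A + r B.
Proof. have := rk_submod hM A B; lia. Qed.

Lemma rk_RC X S Z : rk (restrict (contract M X) S) Z + r X = r ((Z :&: S :&: (G :\: X)) :|: X).
Proof. by rewrite rk_restrict rk_contract. Qed.

Lemma simp_sub X S : simplification_set (contract M X) S -> S \subset G :\: X.
Proof. by case. Qed.

Lemma simp_span X S : X \subset G -> simplification_set (contract M X) S -> r (S :|: X) = r G.
Proof.
move=> sX hS; have sS := simp_sub hS.
apply/eqP; rewrite eqn_leq; apply/andP; split.
  by apply: rk_mono; rewrite subUset sX (subset_trans sS) ?subsetDl.
rewrite -(rk_span hM (A := S :|: X) (T := G)); first by apply: rk_mono; rewrite subsetUr.
move=> e eG; case: (cover_c hM sX hS eG) => [h|eS|[f fS [h1 h2]]].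
- by apply: (rk_mono1 hM _ h); rewrite subsetUr.
- by rewrite (setUidPr _) // sub1set in_setU eS.
- by apply: (rk_mono1 hM _ h1); rewrite subUset sub1set in_setU fS subsetUr.
Qed.

Lemma L2lemma X S k F :
  X \subset G -> simplification_set (contract M X) S -> three_connected (si (contract M X) S) ->
  flat M F -> X \subset F -> k < 3 ->
  r F + r ((G :\: F) :|: X) < r G + r X + k ->
  r F < r X + k \/ r ((G :\: F) :|: X) < r X + k.
Proof.
move=> sX hS h3 fF sXF hk hlt.
have sS := simp_sub hS.
have sSG : S \subset G by apply: subset_trans sS (subsetDl _ _).
have [sF flF] := fF.
set A2 := S :&: F; set B2 := S :\: A2.
have sub_eq : forall Z : {set E}, Z \subset S -> Z :&: S :&: (G :\: X) = Z.
  move=> Z sZ; rewrite (setIidPl sZ); apply/setIidPl; exact: subset_trans sZ sS.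
have rA2 : rk (si (contract M X) S) A2 + r X <= r F.
  rewrite rk_RC sub_eq ?subsetIl //; apply: rk_mono; by rewrite subUset subsetIr sXF.
have rB2 : rk (si (contract M X) S) B2 + r X <= r ((G :\: F) :|: X).
  rewrite rk_RC sub_eq ?subsetDl //; apply: rk_mono; apply: setSU.
  apply/subsetP => e; rewrite !inE => /andP [h eS]; rewrite (subsetP sSG) // andbT.
  by move: h; rewrite eS.
have rS : rk (si (contract M X) S) S + r X = r G.
  by rewrite rk_RC sub_eq // simp_span.
have := h3 k A2 hk; rewrite /k_separation /= subsetIl.
case: (leqP k #|A2|) => hA; case: (leqP k #|S :\: A2|) => hB.
- move=> H; exfalso; apply: H; split => //. rewrite /rank /=. rewrite /B2 in rB2. lia.
- move=> _; right.
  apply: (leq_ltn_trans (n := r (B2 :|: X))); last first.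
    by have := rkU_le B2 X; have := rk_le M B2; rewrite /B2; lia.
  rewrite -(rk_span hM (A := B2 :|: X) (T := (G :\: F) :|: X)); first by apply: rk_mono; rewrite subsetUr.
  move=> e; rewrite in_setU => /orP [|eX]; last first.
    by rewrite (setUidPr _) // sub1set in_setU eX orbT.
  rewrite in_setD => /andP [eF eG].
  case: (cover_c hM sX hS eG) => [h|eS|[f fS [h1 h2]]].
  + by move: eF; rewrite (flat_span hM fF sXF eG h).
  + by rewrite (setUidPr _) // sub1set in_setU in_setD in_setI eS eF.
  + have fF' : f \notin F.
      apply/negP => fF'; move: eF; rewrite (flat_span hM fF (A := f |: X)) //.
      by rewrite subUset sub1set fF'.
    by apply: (rk_mono1 hM _ h1); apply: setSU; rewrite sub1set !inE fS (negbTE fF').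
- move=> _; left.
  apply: (leq_ltn_trans (n := r (A2 :|: X))); last first.
    by have := rkU_le A2 X; have := rk_le M A2; lia.
  rewrite -(rk_span hM (A := A2 :|: X) (T := F)); first by apply: rk_mono; rewrite subsetUr.
  move=> e eF; have eG := subsetP sF e eF.
  case: (cover_c hM sX hS eG) => [h|eS|[f fS [h1 h2]]].
  + by apply: (rk_mono1 hM _ h); rewrite subsetUr.
  + by rewrite (setUidPr _) // sub1set in_setU in_setI eS eF.
  + have fF' : f \in F.
      apply: (flat_span hM fF (A := e |: X)) => //; first by rewrite subUset sub1set eF.
      exact: (subsetP sSG).
    by apply: (rk_mono1 hM _ h1); apply: setSU; rewrite sub1set !inE fS fF'.
- move=> _; left.
  apply: (leq_ltn_trans (n := r (A2 :|: X))); last first.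
    by have := rkU_le A2 X; have := rk_le M A2; lia.
  rewrite -(rk_span hM (A := A2 :|: X) (T := F)); first by apply: rk_mono; rewrite subsetUr.
  move=> e eF; have eG := subsetP sF e eF.
  case: (cover_c hM sX hS eG) => [h|eS|[f fS [h1 h2]]].
  + by apply: (rk_mono1 hM _ h); rewrite subsetUr.
  + by rewrite (setUidPr _) // sub1set in_setU in_setI eS eF.
  + have fF' : f \in F.
      apply: (flat_span hM fF (A := e |: X)) => //; first by rewrite subUset sub1set eF.
      exact: (subsetP sSG).
    by apply: (rk_mono1 hM _ h1); apply: setSU; rewrite sub1set !inE fS fF'.
Qed.

End L2.

Section Simple.
Variable (E : finType) (M : matroid E).
Hypothesis hM : is_matroid M.
Hypothesis hsim : simple M.
Local Notation r := (rk M).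
Local Notation G := (ground M).
Implicit Types (A B C D I J X Y T S F : {set E}) (e f : E).

Lemma indep1 e : e \in G -> indep M [set e].
Proof.
move=> eG; case: (boolP (indep M [set e])) => // h.
by case: hsim => hl _; case: (hl e).
Qed.

Lemma r_one e : e \in G -> r [set e] = 1.
Proof. by move=> eG; rewrite indep_rk ?cards1 ?indep1. Qed.

Lemma r_two e f : e \in G -> f \in G -> e != f -> r [set e; f] = 2.
Proof.
move=> eG fG nef; case: (boolP (indep M [set e; f])) => h.
  by rewrite indep_rk // cards2 nef.
by case: hsim => _ hp; case: (hp e f); split => //; split => //; apply: indep1.
Qed.

Lemma par_mk X e f : e \in G :\: X -> f \in G :\: X -> e != f ->
  r (e |: X) = (r X).+1 -> r (f |: X) = (r X).+1 -> r (e |: (f |: X)) = (r X).+1 ->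
  parallel (contract M X) e f.
Proof.
move=> eG fG nef h1 h2 h3; split => //; split.
- by rewrite indep_c1 eG h1 add1n eqxx.
- by rewrite indep_c1 fG h2 add1n eqxx.
- rewrite /= cards2 nef subUset !sub1set eG fG /= -setUA h3; lia.
Qed.

End Simple.

Section Conn.
Variable (E : finType) (M : matroid E).
Hypothesis h3 : three_connected M.
Local Notation r := (rk M).
Local Notation G := (ground M).

Lemma conn k (A : {set E}) : k < 3 -> A \subset G -> k <= #|A| -> k <= #|G :\: A| ->
  r G + k <= r A + r (G :\: A).
Proof.
move=> hk sA h1 h2; rewrite leqNgt; apply/negP => h.
by have := @h3 k A hk; apply; split.
Qed.
End Conn.

Section S1.
Variable (E : finType) (M : matroid E).
Hypothesis hM : is_matroid M.
Hypothesis hsim : simple M.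
Local Notation r := (rk M).
Local Notation G := (ground M).
Implicit Types (A B C D I J X Y T S F : {set E}) (e f g : E).
Variables (p x : E).
Hypotheses (pG : p \in G) (xG : x \in G) (xp : x != p).
Local Notation P := [set p].

Definition eqv e f := r (e |: (f |: P)) == 2.

Lemma rP : r P = 1. Proof. exact: r_one. Qed.
Lemma reP e : e \in G :\ p -> r (e |: P) = 2.
Proof. by rewrite in_setD1 => /andP [ep eG]; apply: r_two. Qed.

Lemma eqv_sym e f : eqv e f = eqv f e.
Proof. by rewrite /eqv setUCA. Qed.

Lemma eqv_refl e : e \in G :\ p -> eqv e e.
Proof. by move=> h; rewrite /eqv setUA setUid reP. Qed.

Lemma eqv_trans e f g : e \in G :\ p -> f \in G :\ p -> g \in G :\ p ->
  eqv e f -> eqv f g -> eqv e g.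
Proof.
move=> eG fG gG /eqP h1 /eqP h2; rewrite /eqv.
have {}h2 : r (g |: (f |: P)) = 2 by rewrite setUCA.
have := rk_submod hM (e |: (f |: P)) (g |: (f |: P)).
have : r (f |: P) <= r ((e |: (f |: P)) :&: (g |: (f |: P))).
  by apply: rk_mono; rewrite subsetI !subsetUr.
have : r (e |: (g |: P)) <= r ((e |: (f |: P)) :|: (g |: (f |: P))).
  apply: rk_mono; apply/subsetP => y; rewrite !inE; by case/or3P => ->; rewrite ?orbT.
have : r (g |: P) <= r (e |: (g |: P)) by apply: rk_mono; rewrite subsetUr.
rewrite (reP fG) (reP gG) h1 h2 -/P; lia.
Qed.

Lemma nonloop1 e : e \in G :\: P -> ~ loop (contract M P) e.
Proof.
by move=> eG /(loop_c hM); rewrite rP reP.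
Qed.

Lemma eqv_par e f : e \in G :\ p -> f \in G :\ p -> e != f -> eqv e f ->
  parallel (contract M P) e f.
Proof.
move=> eG fG nef /eqP h; apply: par_mk => //; rewrite ?rP ?reP //.
Qed.

Lemma par_eqv e f : parallel (contract M P) e f -> eqv e f.
Proof. by case/(par_c hM) => _ _; rewrite rP /eqv => ->. Qed.


Variable S2 : {set E}.
Hypothesis hS2 : simplification_set (contract M [set x; p]) S2.

Lemma rX2 : r [set x; p] = 2. Proof. exact: r_two. Qed.

Lemma S2sub : S2 \subset G :\: [set x; p]. Proof. exact: simp_sub hS2. Qed.

Lemma S2_G f : f \in S2 -> f \in G :\ p.
Proof.
move=> fS; have := subsetP S2sub f fS; rewrite !inE negb_or => /andP [/andP [_ ->] ->] //.
Qed.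

Lemma S2_r f : f \in S2 -> r (f |: [set x; p]) = 3.
Proof.
move=> fS; rewrite nonloop_c ?rX2 //; first exact: (subsetP S2sub).
by case: hS2 => _ h _ _; apply: h.
Qed.

Definition old := x |: S2.

Lemma old_G e : e \in old -> e \in G :\ p.
Proof. rewrite in_setU1 => /orP [/eqP ->|]; [by rewrite in_setD1 xp xG | exact: S2_G]. Qed.

Lemma S2_x f : f \in S2 -> ~~ eqv f x.
Proof. by move=> fS; rewrite /eqv S2_r. Qed.

Lemma S2_S2 f g : f \in S2 -> g \in S2 -> f != g -> ~~ eqv f g.
Proof.
move=> fS gS nfg; apply/negP => /eqP h.
case: hS2 => _ _ hnp _; apply: (hnp f g fS gS).
apply: par_mk => //; try exact: (subsetP S2sub); rewrite ?rX2 ?S2_r //.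
have : r (g |: [set x; p]) <= r (f |: (g |: [set x; p])) by apply: rk_mono; rewrite subsetUr.
have : r (f |: (g |: [set x; p])) <= (r (f |: (g |: P))).+1.
  have -> : f |: (g |: [set x; p]) = x |: (f |: (g |: P)).
    by apply/setP => y; rewrite !inE; case: (y == f); case: (y == g); case: (y == x).
  exact: rkU1.
rewrite h S2_r //; lia.
Qed.

Lemma old_old e f : e \in old -> f \in old -> e != f -> ~~ eqv e f.
Proof.
rewrite !in_setU1 => /orP [/eqP ->|eS] /orP [/eqP ->|fS] nef.
- by rewrite eqxx in nef.
- by rewrite eqv_sym S2_x.
- exact: S2_x.
- exact: S2_S2.
Qed.

Definition S1 := old :|: [set e in G :\ p | [forall f in old, ~~ eqv e f] &&
   [forall g in G :\ p, eqv e g ==> (enum_rank e <= enum_rank g)]].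

Lemma S1_x : x \in S1. Proof. by rewrite in_setU setU11. Qed.
Lemma S1_S2 : S2 \subset S1. Proof. by rewrite (subset_trans _ (subsetUl _ _)) // subsetUr. Qed.

Lemma S1_G e : e \in S1 -> e \in G :\ p.
Proof. by rewrite in_setU => /orP [/old_G|]; rewrite // inE => /andP [-> _]. Qed.

Lemma S1_simp : simplification_set (contract M P) S1.
Proof.
split.
- by apply/subsetP => e /S1_G.
- by move=> e /S1_G; apply: nonloop1.
- move=> e f eS fS pef; have ef := par_eqv pef.
  have nef : e != f by case: pef.
  move: eS fS; rewrite /S1 in_setU => /orP [eo|eN]; rewrite in_setU; last first.
    move: eN; rewrite inE => /andP [eG /andP [/forallP he1 /forallP he2]].
    case/orP => [fo|]; first by have := he1 f; rewrite fo ef.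
    rewrite inE => /andP [fG /andP [_ /forallP hf2]].
    have := he2 f; rewrite fG ef /= => h1.
    have := hf2 e; rewrite eG eqv_sym ef /= => h2.
    have : enum_rank e = enum_rank f by apply: val_inj; apply/eqP; rewrite eqn_leq h1 h2.
    by move/enum_rank_inj => h; rewrite h eqxx in nef.
    case/orP => [fo|]; first by move: ef; apply/negP; apply: old_old.
    rewrite inE => /andP [fG /andP [/forallP hf1 _]].
    by have := hf1 e; rewrite eo eqv_sym ef.
- move=> e eG _.
  case: (boolP [exists f in old, eqv e f]).
    case/existsP => f /andP [fo ef].
    case: (eqVneq e f) => [->|nef]; first by left; rewrite in_setU fo.
    right; exists f; first by rewrite in_setU fo.
    by apply: eqv_par => //; apply: old_G.
  move/existsPn => hno.
  have eG' : e \in G :\ p by exact: eG.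
  case: (@arg_minnP _ e (fun g => (g \in G :\ p) && eqv e g) (fun g => enum_rank g)).
    by rewrite eG' eqv_refl.
  move=> g /andP [gG eg] hmin.
  have gS : g \in S1.
    rewrite in_setU inE gG /=; apply/orP; right; apply/andP; split.
      apply/forallP => f; apply/implyP => fo; apply/negP => gf.
      have := hno f; rewrite fo /=; move/negP; apply.
      by apply: (eqv_trans eG' gG (old_G fo)).
    apply/forallP => h; apply/implyP => hG; apply/implyP => gh.
    apply: hmin; rewrite hG /=; exact: (eqv_trans eG' gG hG).
  case: (eqVneq e g) => [->|neg]; first by left.
  by right; exists g => //; apply: eqv_par.
Qed.

End S1.

Lemma iso_transfer (E E' : finType) (Q Q' : matroid E) (N : matroid E') :
  ground Q = ground Q' -> (forall I : {set E}, I \subset ground Q -> indep Q I = indep Q' I) ->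
  iso_matroid Q N -> iso_matroid Q' N.
Proof.
move=> hg hi [f [h1 h2 h3]]; exists f; split; rewrite -?hg //.
by move=> I sI; rewrite -hi // h3.
Qed.

Section Minor.
Variable (E E' : finType) (M : matroid E) (N : matroid E').
Hypothesis hM : is_matroid M.
Hypothesis hsim : simple M.
Local Notation r := (rk M).
Local Notation G := (ground M).
Variables (p x : E).
Hypotheses (pG : p \in G) (xG : x \in G) (xp : x != p).
Variable S2 : {set E}.
Hypothesis hS2 : simplification_set (contract M [set x; p]) S2.
Local Notation P := [set p].
Local Notation S1 := (S1 M p x S2).

Lemma minor_transfer : has_minor (si (contract M [set x; p]) S2) N ->
  has_minor (si (contract M P) S1) N.
Proof.
case=> C [D [sC sD dCD hiso]].
have sS2 := S2sub hS2.
have xS2 : x \notin S2.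
  apply/negP => /(subsetP sS2); rewrite !inE eqxx; by case/andP.
have sS21 := S1_S2 M p x S2.
have xS1 := S1_x M p x S2.
have sS1 : S1 \subset G :\: P by apply/subsetP => e /(S1_G xG xp hS2).
exists (x |: C), (D :|: (S1 :\: old x S2)); split.
- by rewrite /= subUset sub1set xS1 (subset_trans sC).
- by rewrite /= subUset (subset_trans sD) // subsetDl.
- rewrite -setI_eq0; apply/eqP/setP => y; rewrite !inE.
  case: (boolP (y \in C)) => yC.
    rewrite (disjointFr dCD yC) (subsetP sC y yC) /=; by rewrite orbT andbF.
  rewrite orbF; case: (eqVneq y x) => [->|] //=.
  case: (boolP (x \in D)) => //= xD; move: xS2; by rewrite (subsetP sD x xD).
apply: iso_transfer hiso.
- apply/setP => y; rewrite /= !inE.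
  case: (boolP (y \in S2)) => yS2.
    have -> : y == x = false by apply/negP => /eqP h; move: xS2; rewrite -h yS2.
    by case: (y \in C); case: (y \in D) => //=; rewrite orbT.
  rewrite orbF. case: (y == x) => //=; rewrite !andbF //.
  apply/esym/negbTE/negP => /and5P [/norP [_ h] _ a b c]; by rewrite a b c in h.
move=> I sI; rewrite /=.
have sI2 : I \subset S2 :\: C by apply: subset_trans sI (subsetDl _ _).
have sIS : I \subset S2 by apply: subset_trans sI2 (subsetDl _ _).
move: (sI); rewrite /= => ->.
have e1 : (I \subset (S2 :\: C)) = true by exact: sI2.
have e2 : (I \subset (S1 :\: (x |: C))) = true.
  apply/subsetP => y yI; have := subsetP sI2 y yI; rewrite in_setD => /andP [yC yS].
  rewrite in_setD (subsetP sS21 y yS) andbT in_setU1 negb_or yC andbT.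
  apply/eqP => h; move: xS2; by rewrite -h yS.
rewrite e1 e2 /=.
have rX2 : r [set x; p] = 2 by exact: r_two.
have rP : r P = 1 by exact: r_one.
have k1 := rk_RC hM [set x; p] S2 (I :|: C).
have k2 := rk_RC hM [set x; p] S2 C.
have k3 := rk_RC hM P S1 (I :|: (x |: C)).
have k4 := rk_RC hM P S1 (x |: C).
have sICS : I :|: C \subset S2 by rewrite subUset sIS sC.
have q1 : (I :|: C) :&: S2 :&: (G :\: [set x; p]) = I :|: C.
  by rewrite (setIidPl sICS); apply/setIidPl; apply: subset_trans sICS sS2.
have q2 : C :&: S2 :&: (G :\: [set x; p]) = C.
  by rewrite (setIidPl sC); apply/setIidPl; apply: subset_trans sC sS2.
have sxC : x |: C \subset S1 by rewrite subUset sub1set xS1 (subset_trans sC).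
have sIxC : I :|: (x |: C) \subset S1 by rewrite subUset sxC (subset_trans sIS).
have q3 : (I :|: (x |: C)) :&: S1 :&: (G :\: P) :|: P = (I :|: C) :|: [set x; p].
  rewrite (setIidPl sIxC) (setIidPl (subset_trans sIxC sS1)).
  by apply/setP => y; rewrite !inE; case: (y \in I); case: (y == x); case: (y \in C).
have q4 : (x |: C) :&: S1 :&: (G :\: P) :|: P = C :|: [set x; p].
  rewrite (setIidPl sxC) (setIidPl (subset_trans sxC sS1)).
  by apply/setP => y; rewrite !inE; case: (y == x); case: (y \in C).
rewrite q1 in k1; rewrite q2 in k2; rewrite q3 in k3; rewrite q4 in k4.
have -> : (I \subset S1 :\: (x |: C) :\: (D :|: S1 :\: old x S2)) = true.
  apply/subsetP => y yI; have := subsetP sI y yI; rewrite /= !in_setD => /andP [yD /andP [yC' yS']].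
  have yx : y != x by apply/eqP => h; move: xS2; rewrite -h yS'.
  rewrite (subsetP sS21 y yS') in_setU1 negb_or yx yC' in_setU negb_or yD /= andbT.
  by rewrite in_setD negb_and negbK /old in_setU1 yS' orbT.
rewrite andTb /si.
move: k1 k2 k3 k4.
move: (rk (restrict (contract M [set x; p]) S2) (I :|: C)) => a.
move: (rk (restrict (contract M [set x; p]) S2) C) => b.
move: (rk (restrict (contract M P) S1) (I :|: (x |: C))) => c.
move: (rk (restrict (contract M P) S1) (x |: C)) => d.
move: (r (I :|: C :|: [set x; p])) => u.
move: (r (C :|: [set x; p])) => v.
move: #|I| => n.
rewrite rX2 rP => h1 h2 h3 h4.
have -> : c = a.+1 by move: h1 h3; clear; lia.
have -> : d = b.+1 by move: h2 h4; clear; lia.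
by rewrite addnS eqSS.
Qed.

End Minor.

Section Helpers.
Variable (E : finType) (M : matroid E).
Hypothesis hM : is_matroid M.
Hypothesis hsim : simple M.
Hypothesis h3 : three_connected M.
Local Notation r := (rk M).
Local Notation G := (ground M).
Implicit Types (A B C D I J X Y T S F W Z : {set E}) (e f g : E).

Lemma twosep W : W \subset G -> 2 <= #|W| -> G :\: W != set0 -> r W < r G ->
  r G + 2 <= r W + r (G :\: W).
Proof.
move=> sW hW hZ hr.
have hZ1 : 1 <= #|G :\: W| by rewrite card_gt0.
case: (leqP 2 #|G :\: W|) => h2; first exact: conn.
have := conn h3 (k := 1) isT sW (ltnW hW) hZ1.
have := rk_le M (G :\: W); lia.
Qed.

Variable p : E.
Hypothesis pG : p \in G.
Local Notation P := [set p].

Lemma rho_bound S Z : simplification_set (contract M P) S -> Z \subset S ->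
  1 + minn #|Z| 2 <= r (Z :|: P).
Proof.
move=> hS sZ.
have sS := simp_sub hS.
have rP : r P = 1 by exact: r_one.
have reP : forall e, e \in S -> r (e |: P) = 2.
  move=> e eS; have := subsetP sS e eS; rewrite !inE => /andP [ep eG].
  by apply: r_two.
case: (leqP 2 #|Z|) => hZ.
  case/card_gt1P: hZ => e [f [eZ fZ nef]].
  have eS := subsetP sZ e eZ; have fS := subsetP sZ f fZ.
  have h1 : r (e |: (f |: P)) <= r (Z :|: P).
    apply: rk_mono; apply/subsetP => y; rewrite !inE.
    by case/or3P => [/eqP->|/eqP->|->]; rewrite ?eZ ?fZ ?orbT.
  have h2 : r (f |: P) <= r (e |: (f |: P)) by apply: rk_mono; rewrite subsetUr.
  have h3' : r (e |: (f |: P)) != 2.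
    apply/eqP => h; case: hS => _ _ hnp _; apply: (hnp e f eS fS).
    apply: par_mk => //; try exact: (subsetP sS).
    all: rewrite ?rP ?reP ?h //.
  rewrite (reP f fS) in h2; lia.
have := card_gt0P (A := Z).
case: #|Z| hZ => [|[|//]] _ hc.
  apply: (leq_trans (n := r P)); first by rewrite rP.
  apply: rk_mono; exact: subsetUr.
have [e eZ] : exists e, e \in Z by apply/hc.
apply: (leq_trans (n := r (e |: P))); first by rewrite (reP e (subsetP sZ e eZ)).
apply: rk_mono; by rewrite setSU // sub1set.
Qed.

End Helpers.

Theorem lemma5p1 (E E' : finType) (M : matroid E) (N : matroid E') (x p : E) :
  is_matroid M -> simple M -> three_connected M ->
  is_matroid N -> simple N -> three_connected N ->
  has_minor M N ->
  x \in ground M -> p \in ground M ->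
  vert_N_contractible M N [set x; p] ->
  ~ vert_N_contractible M N [set p] ->
  4 <= rank M /\ exists2 Cs : {set E}, vertbarrier M N Cs p & x \in Cs.
Proof.
move=> hM hsim h3 _ _ _ _ xG pG hv hnot.
have hv' := hv.
case: hv => S2 [hS2 h3S2 hmS2].
have xp : x != p.
  by apply/eqP => e; apply: hnot; move: hv'; rewrite e setUid.
set T1 := S1 M p x S2.
have hS1 : simplification_set (contract M [set p]) T1 := S1_simp hM hsim pG xG xp hS2.
have hm1 := minor_transfer hM hsim pG xG xp hS2 hmS2.
have n3 : ~ three_connected (si (contract M [set p]) T1) by move=> h; apply: hnot; exists T1.
have [k [X0 [hk hsep0]]] : exists k X, k < 3 /\ k_separation (si (contract M [set p]) T1) k X.
  apply: NNPP => hne; apply: n3 => k X hk hs; apply: hne; by exists k, X.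
have [X [hsep xX]] : exists X1, k_separation (si (contract M [set p]) T1) k X1 /\ x \notin X1.
  case: (boolP (x \in X0)) => xX0; last by exists X0.
  exists (T1 :\: X0); split; last by rewrite in_setD xX0.
  case: hsep0 => /= sX h1 h2 h4.
  have eSS : T1 :\: (T1 :\: X0) = X0 by rewrite setDDr setDv set0U; apply/setIidPr.
  split => //=; first exact: subsetDl.
  - by rewrite eSS.
  - by rewrite eSS addnC.
clear hsep0 X0 n3 hm1.
case: hsep => /= sX hkX hkY hlt.
have rP : rk M [set p] = 1 := r_one hsim pG.
have rX2 : rk M [set x; p] = 2 := r_two hsim xG pG xp.
have sS1 : T1 \subset (ground M) :\: [set p] := simp_sub hS1.
have sS1G : T1 \subset (ground M) by apply: subset_trans sS1 (subsetDl _ _).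
have sPG : [set p] \subset (ground M) by rewrite sub1set.
have sX2G : [set x; p] \subset (ground M) by rewrite subUset !sub1set xG pG.
have rkL : forall Z : {set E}, Z \subset T1 -> rk (si (contract M [set p]) T1) Z + 1 = rk M (Z :|: [set p]).
  move=> Z sZ; rewrite -rP /si rk_RC // (setIidPl sZ); congr (rk M (_ :|: _)).
  by apply/setIidPl; exact: subset_trans sZ sS1.
have rkS : rk (si (contract M [set p]) T1) T1 + 1 = rk M (ground M).
  by rewrite rkL // (simp_span hM sPG hS1).
have hmain : rk M (X :|: [set p]) + rk M ((T1 :\: X) :|: [set p]) < rk M (ground M) + 1 + k.
  move: hlt; rewrite /rank /= -(rkL X sX) -(rkL (T1 :\: X) (subsetDl _ _)) -rkS.
  clear; lia.
have xT1 : x \in T1 := S1_x M p x S2.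
have xY : x \in (T1 :\: X) by rewrite in_setD xX xT1.
have bX := rho_bound hsim pG hS1 sX.
have bY := rho_bound hsim pG hS1 (subsetDl T1 X : (T1 :\: X) \subset T1).
have bX' : 1 + k <= rk M (X :|: [set p]).
  apply: leq_trans bX; rewrite leq_add2l leq_min hkX; exact: hk.
have bY' : 1 + k <= rk M ((T1 :\: X) :|: [set p]).
  apply: leq_trans bY; rewrite leq_add2l leq_min hkY; exact: hk.
have sXP : X :|: [set p] \subset ground M by rewrite subUset sPG (subset_trans sX sS1G).
have [W eW] : exists W, W = cl M (X :|: [set p]) by exists (cl M (X :|: [set p])).
have fW : flat M W by rewrite eW; exact (cl_flat hM sXP).
have rW : rk M W = rk M (X :|: [set p]) by rewrite eW; exact (rk_cl hM sXP).
have sXPW : X :|: [set p] \subset W by rewrite eW; exact (sub_cl sXP).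
have pW : p \in W by apply: (subsetP sXPW); rewrite in_setU set11 orbT.
have sW : W \subset ground M by case: fW.
clear eW.
have hspan : rk M ((T1 :\: X :|: [set p]) :|: (ground M :\: W)) = rk M (T1 :\: X :|: [set p]).
  apply: (rk_span hM) => e; rewrite in_setD => /andP [eW' eG].
  case: (cover_c hM sPG hS1 eG) => [h|eS|[f fS [h1 h2]]].
  - by move: eW'; rewrite (flat_span hM fW (A := [set p])) // sub1set.
  - rewrite (setUidPr _) // sub1set !in_setU in_setD eS andbT.
    by apply/orP; left; apply/negP => eX; move: eW'; rewrite (subsetP sXPW) // in_setU eX.
  - have fY : f \in T1 :\: X.
      rewrite in_setD fS andbT; apply/negP => fX.
      move: eW'; rewrite (flat_span hM fW (A := f |: [set p])) //.
      by rewrite subUset sub1set (subsetP sXPW) ?in_setU ?fX // sub1set pW.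
    apply: (rk_mono1 hM _ h1); apply: setSU; by rewrite sub1set.
have hZ1 : rk M ((ground M :\: W) :|: [set x; p]) <= rk M (T1 :\: X :|: [set p]).
  rewrite -hspan; apply: rk_mono; rewrite subUset subsetUr /= subUset !sub1set.
  by rewrite !in_setU xY set11 !orbT.
have hZ2 : rk M (p |: (ground M :\: W)) <= rk M (T1 :\: X :|: [set p]).
  rewrite -hspan; apply: rk_mono; rewrite subUset subsetUr /= !sub1set.
  by rewrite !in_setU set11 !orbT.
have hZ3 : rk M (ground M :\: W) <= rk M (T1 :\: X :|: [set p]).
  apply: leq_trans hZ2; apply: rk_mono; exact: subsetUr.
have rWG : rk M W < rk M (ground M) by rewrite rW; move: hmain bY'; clear; lia.
have Zne : ground M :\: W != set0.
  apply/negP => /eqP h; have : ground M \subset W by rewrite -setD_eq0 h.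
  move/(rk_mono M) => h'; move: h' rWG; clear; lia.
have k2 : k = 2.
  have : ~ (k <= 1).
    move=> hk1.
    have h1W : 1 <= #|W| by rewrite card_gt0; apply/set0Pn; exists p.
    have h1Z : 1 <= #|ground M :\: W| by rewrite card_gt0.
    case: (leqP k 0) => hk0.
      have := conn h3 (k := 1) isT sW h1W h1Z; move: hZ3 hmain bX' rW hk0; clear; lia.
    have W2 : 1 < #|W|.
      have [e eX] : exists e, e \in X by apply/card_gt0P; move: hk0 hkX; clear; lia.
      apply/card_gt1P; exists e, p; split => //; first by apply: (subsetP sXPW); rewrite in_setU eX.
      apply/eqP => ep; have := subsetP sS1 e (subsetP sX e eX); by rewrite ep in_setD set11.
    have := twosep h3 sW W2 Zne rWG; move: hZ3 hmain rW hk1; clear; lia.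
  move: hk; clear; lia.
subst k.
have rW3 : 3 <= rk M W by rewrite rW; exact: bX'.
have xW : x \notin W.
  apply/negP => xW.
  have sX2W : [set x; p] \subset W by rewrite subUset !sub1set xW pW.
  have hc : rk M W + rk M (ground M :\: W :|: [set x; p]) < rk M (ground M) + rk M [set x; p] + 1.
    rewrite rX2; move: hZ1 hmain rW; clear; lia.
  case: (L2lemma hM sX2G hS2 h3S2 fW sX2W (isT : 1 < 3) hc); rewrite rX2 => h.
    by move: h rW3; clear; lia.
  case/set0Pn: Zne => e; rewrite in_setD => /andP [eW eG].
  have : rk M (e |: [set x; p]) = rk M [set x; p].
    apply/eqP; rewrite eqn_leq (rk_le1 M) andbT rX2.
    apply: (leq_trans (n := rk M (ground M :\: W :|: [set x; p]))).
      apply: rk_mono; apply: setSU; by rewrite sub1set in_setD eW eG.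
    by move: h; clear; lia.
  move/(flat_span hM fW sX2W eG); by rewrite (negbTE eW).
have sxW : x |: W \subset ground M by rewrite subUset sub1set xG sW.
have [F eF] : exists F, F = cl M (x |: W) by exists (cl M (x |: W)).
have fF : flat M F by rewrite eF; exact (cl_flat hM sxW).
have rF : rk M F = (rk M W).+1 by rewrite eF (rk_cl hM sxW) (flat_notin hM fW xG xW).
have sxWF : x |: W \subset F by rewrite eF; exact (sub_cl sxW).
clear eF.
have sWF : W \subset F by apply: subset_trans sxWF; exact: subsetUr.
have sX2F : [set x; p] \subset F.
  by rewrite subUset !sub1set (subsetP sxWF) ?setU11 // (subsetP sWF).
have hB1 : rk M (ground M :\: F :|: [set x; p]) <= rk M (ground M :\: W :|: [set x; p]).
  apply: rk_mono; apply: setSU; apply: setDS; exact sWF.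
have hcB : rk M F + rk M (ground M :\: F :|: [set x; p]) < rk M (ground M) + rk M [set x; p] + 2.
  rewrite rX2 rF; move: hB1 hZ1 hmain rW; clear; lia.
have hB2 : rk M (ground M :\: F :|: [set x; p]) < 4.
  case: (L2lemma hM sX2G hS2 h3S2 fF sX2F (isT : 2 < 3) hcB); rewrite rX2 => h //.
  by move: h rF rW3; clear; lia.
have rWG1 : rk M (ground M) <= (rk M W).+1.
  case: (leqP (rk M (ground M) + 3) (rk M F + rk M (ground M :\: F :|: [set x; p]))) => hc.
    by move: hc hB2 rF; clear; lia.
  have hc' : rk M F + rk M (ground M :\: F :|: [set x; p]) < rk M (ground M) + rk M [set x; p] + 1.
    by rewrite rX2 -addnA.
  case: (L2lemma hM sX2G hS2 h3S2 fF sX2F (isT : 1 < 3) hc'); rewrite rX2 => h.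
    by move: h rF rW3; clear; lia.
  have eGF : ground M :\: F = set0.
    apply/eqP/set0Pn => [[e]]; rewrite in_setD => /andP [eF eG].
    have : rk M (e |: [set x; p]) = rk M [set x; p].
      apply/eqP; rewrite eqn_leq (rk_le1 M) andbT rX2.
      apply: (leq_trans (n := rk M (ground M :\: F :|: [set x; p]))).
        apply: rk_mono; apply: setSU; by rewrite sub1set in_setD eF eG.
      by move: h; clear; lia.
    move/(flat_span hM fF sX2F eG); by rewrite (negbTE eF).
  have : ground M \subset F by rewrite -setD_eq0 eGF.
  by move/(rk_mono M); rewrite rF.
have rWe : (rk M W).+1 = rk M (ground M) by move: rWG rWG1; clear; lia.
have W2 : 1 < #|W|.
  have [e eX] : exists e, e \in X by apply/card_gt0P; move: hkX; clear; lia.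
  apply/card_gt1P; exists e, p; split => //; first by apply: (subsetP sXPW); rewrite in_setU eX.
  apply/eqP => ep; have := subsetP sS1 e (subsetP sX e eX); by rewrite ep in_setD set11.
have hY3 : rk M (T1 :\: X :|: [set p]) <= 3 by move: hmain rW rWe; clear; lia.
have rZ3 : rk M (ground M :\: W) = 3.
  have := twosep h3 sW W2 Zne rWG; move: hZ3 hY3 rWe; clear; lia.
have rpZ : rk M (p |: (ground M :\: W)) = 3.
  have := rk_le1 M (ground M :\: W) p; move: hZ2 hY3 rZ3; clear; lia.
split.
  rewrite /rank; move: rWe rW3; clear; lia.
exists (ground M :\: W); last by rewrite in_setD xW xG.
have eGW : ground M :\: (ground M :\: W) = W by rewrite setDDr setDv set0U; apply/setIidPr.
split.
- split.
  + by rewrite /=; exact: subsetDl.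
  + rewrite /= subsetDl /= eGW; apply/eqP => h; move: rWG; by rewrite h ltnn.
  + move=> D hD; rewrite /=.
    have sD : D \subset ground M :\: W := proper_sub hD.
    rewrite (subset_trans sD) ?subsetDl //=.
    case/properP: hD => _ [e eZ eD].
    move: (eZ); rewrite in_setD => /andP [eW eG].
    have hsub : e |: W \subset ground M :\: D.
      apply/subsetP => y; rewrite in_setU1 => /orP [/eqP ->|yW]; first by rewrite in_setD eD eG.
      rewrite in_setD (subsetP sW y yW) andbT; apply/negP => yD.
      by move: (subsetP sD y yD); rewrite in_setD yW.
    have h2 := rk_mono M hsub; rewrite (flat_notin hM fW eG eW) rWe in h2.
    have h1 := rk_mono M (subsetDl (ground M) D).
    apply/eqP; move: h1 h2; clear; lia.
- exact: rZ3.
- rewrite in_setD; apply/andP; split; first by rewrite in_setD pW.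
  by rewrite /cl inE pG rpZ rZ3.
- by exists x; [rewrite in_setD xW xG | exact: hv'].
Qed.
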